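(* For $\mu_1,\mu_2\in\mathbb{C}$, the function $$\phi^B_{\mu_1,\mu_2}=\Big[\prod_{r=1}^n(z_r^{1/2}-z_r^{-1/2})^{\mu_1}\Big]\prod_{1\le i<j\le n}(z_i+z_i^{-1}-z_j-z_j^{-1})^{\mu_2}$$ (on any domain where the factors are nonzero and branches are fixed) satisfies $$\sum_{r=1}^n(z_r\partial_{z_r})^2(\phi^B_{\mu_1,\mu_2})+\Big[\mu_1(1-\mu_1)\sum_{r=1}^n\frac{z_r}{(z_r-1)^2}+2\mu_2(1-\mu_2)\Big(\sum_{1\le i<j\le n}\frac{z_iz_j}{(z_i-z_j)^2}+\sum_{1\le i<j\le n}\frac{z_iz_j}{(z_iz_j-1)^2}\Big)\Big]\phi^B_{\mu_1,\mu_2}$$ $$=\Big(\frac{n\mu_1^2}{4}+\frac{n(n-1)}{2}\mu_1\mu_2+\frac{n(n-1)(2n-1)\mu_2^2}{6}\Big)\phi^B_{\mu_1,\mu_2}.$$ *)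

(* Defs.v *)
From Stdlib Require Import Reals List Arith ClassicalEpsilon.
From Coquelicot Require Import Coquelicot.
Open Scope C_scope.

Definition cexp (z : C) : C :=
  (exp (fst z) * cos (snd z), exp (fst z) * sin (snd z))%R.

(* points of C^n are represented by functions nat -> C; coordinates >= n are
   irrelevant *)
Definition upd (z : nat -> C) (r : nat) (w : C) : nat -> C :=
  fun k => if Nat.eqb k r then w else z k.

Definition pdiff (f : (nat -> C) -> C) (r : nat) (z : nat -> C) : Prop :=
  exists d : C, is_derive (fun w : C => f (upd z r w)) (z r) d.

(* the partial derivative d f / d z_r at z (meaningful when pdiff f r z) *)
Definition pderiv (f : (nat -> C) -> C) (r : nat) (z : nat -> C) : C :=
  epsilon (inhabits (RtoC 0))
    (fun d : C => is_derive (fun w : C => f (upd z r w)) (z r) d).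

Definition euler (r : nat) (f : (nat -> C) -> C) : (nat -> C) -> C :=
  fun z => z r * pderiv f r z.

Definition csum (n : nat) (f : nat -> C) : C :=
  fold_right Cplus (RtoC 0) (map f (seq 0 n)).

Definition csum2 (n : nat) (f : nat -> nat -> C) : C :=
  csum n (fun j => csum j (fun i => f i j)).

(* U is open in each coordinate direction z_r, r < n (every open subset of
   C^n has this property) *)
Definition coord_open (n : nat) (U : (nat -> C) -> Prop) : Prop :=
  forall z, U z -> forall r, (r < n)%nat ->
    locally (z r) (fun w : C => U (upd z r w)).

(* the function phi^B with branches fixed by logarithms l r (of
   z_r^{1/2} - z_r^{-1/2}) and m i j (of z_i + z_i^{-1} - z_j - z_j^{-1}):
   w^mu := exp (mu * log w) *)
Definition phiB (n : nat) (mu1 mu2 : C)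
  (l : nat -> (nat -> C) -> C) (m : nat -> nat -> (nat -> C) -> C)
  : (nat -> C) -> C :=
  fun z => cexp (mu1 * csum n (fun r => l r z)
                 + mu2 * csum2 n (fun i j => m i j z)).

(* Main.v *)
Require Import Defs.
From Stdlib Require Import Reals List Arith Lra Lia Psatz ClassicalEpsilon FunctionalExtensionality.
From Coquelicot Require Import Coquelicot.
Open Scope C_scope.

Lemma fold_Cplus_acc (l : list C) (a : C) :
  fold_right Cplus a l = fold_right Cplus 0 l + a.
Proof. induction l as [|x l IH]; simpl. - ring. - rewrite IH. ring. Qed.

Lemma csum_0 f : csum 0 f = 0.
Proof. reflexivity. Qed.

Lemma csum_S n f : csum (S n) f = csum n f + f n.
Proof.
  unfold csum. rewrite seq_S, map_app, fold_right_app. simpl.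
  rewrite fold_Cplus_acc. f_equal. ring.
Qed.

Lemma csum_ext n f g : (forall k, (k < n)%nat -> f k = g k) -> csum n f = csum n g.
Proof.
  induction n; intros H. reflexivity.
  rewrite !csum_S. rewrite IHn by (intros; apply H; lia). rewrite H by lia. reflexivity.
Qed.

Lemma csum_plus n f g : csum n (fun k => f k + g k) = csum n f + csum n g.
Proof. induction n. simpl. unfold csum; simpl; ring. rewrite !csum_S, IHn. ring. Qed.

Lemma csum_scal n c f : csum n (fun k => c * f k) = c * csum n f.
Proof. induction n. unfold csum; simpl; ring. rewrite !csum_S, IHn. ring. Qed.

Lemma csum_const n c : csum n (fun _ => c) = INR n * c.
Proof.
  induction n. unfold csum; simpl; ring.
  rewrite csum_S, IHn, S_INR, RtoC_plus. ring.
Qed.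

Lemma csum_INR n : csum n (fun k => RtoC (INR k)) = INR n * (INR n - 1) / 2.
Proof.
  induction n. unfold csum; simpl; field.
  rewrite csum_S, IHn, S_INR, RtoC_plus. field.
Qed.

Lemma csum2_const n c : csum2 n (fun _ _ => c) = INR n * (INR n - 1) / 2 * c.
Proof.
  unfold csum2. rewrite (csum_ext n _ (fun k => c * INR k)).
  rewrite csum_scal, csum_INR. field.
  intros; rewrite csum_const; ring.
Qed.

Lemma csum_pair n (F : nat -> nat -> C) :
  csum n (fun a => csum n (fun b => F a b)) =
  csum n (fun a => F a a) + csum2 n (fun i j => F i j + F j i).
Proof.
  induction n. unfold csum2, csum; simpl; ring.
  unfold csum2 in *. rewrite !csum_S.
  rewrite (csum_ext n (fun a => csum (S n) (fun b => F a b))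
              (fun a => csum n (fun b => F a b) + F a n))
    by (intros; apply csum_S).
  rewrite csum_plus, IHn, csum_plus.
  replace (csum n (F n)) with (csum n (fun b => F n b)) by reflexivity. ring.
Qed.

Lemma csum_zero n (f : nat -> C) : (forall k, (k < n)%nat -> f k = 0) -> csum n f = 0.
Proof. intros H. rewrite (csum_ext n f (fun _ => 0)). rewrite csum_const. ring. intros k Hk; apply H; exact Hk. Qed.

Lemma csum2_ext n (f g : nat -> nat -> C) : (forall i j, (i < j)%nat -> (j < n)%nat -> f i j = g i j) ->
  csum2 n f = csum2 n g.
Proof.
  intros H. unfold csum2. apply csum_ext. intros j Hj. apply csum_ext. intros i Hi. apply H; lia.
Qed.

Lemma csum_triple n (H : nat -> nat -> nat -> C) :
  (forall a b c, (a < n)%nat -> (b < n)%nat -> (c < n)%nat ->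
     (a = b \/ b = c \/ a = c) -> H a b c = 0) ->
  (forall a b c, (a < n)%nat -> (b < n)%nat -> (c < n)%nat ->
     a <> b -> b <> c -> a <> c ->
     H a b c + H a c b + H b a c + H b c a + H c a b + H c b a = 2) ->
  csum n (fun a => csum n (fun b => csum n (fun c => H a b c))) =
  INR n * (INR n - 1) * (INR n - 2) / 3.
Proof.
  induction n; intros H0 H2.
  - unfold csum; simpl; field.
  - assert (E1 : forall a, (a < n)%nat ->
      csum (S n) (fun b => csum (S n) (fun c => H a b c)) =
      csum n (fun b => csum n (fun c => H a b c)) +
      (csum n (fun b => H a b n) + csum n (fun c => H a n c))).
    { intros a Ha. rewrite csum_S.
      rewrite (csum_ext n _ (fun b => csum n (fun c => H a b c) + H a b n))
        by (intros; apply csum_S).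
      rewrite csum_plus, csum_S. rewrite (H0 a n n) by lia. ring. }
    assert (E2 : csum (S n) (fun b => csum (S n) (fun c => H n b c)) =
                 csum n (fun b => csum n (fun c => H n b c))).
    { rewrite csum_S.
      rewrite (csum_ext n _ (fun b => csum n (fun c => H n b c) + 0)).
      rewrite csum_plus, csum_S, csum_const.
      rewrite (csum_zero n (fun c => H n n c)) by (intros; apply H0; lia).
      rewrite (H0 n n n) by lia. ring.
      intros b Hb. rewrite csum_S. rewrite (H0 n b n) by lia. reflexivity. }
    rewrite csum_S, E2.
    rewrite (csum_ext n _ _ E1), csum_plus, IHn.
    2:{ intros; apply H0; auto. }
    2:{ intros; apply H2; auto. }
    assert (E3 : csum n (fun a => csum n (fun b => H a b n) + csum n (fun c => H a n c))
        + csum n (fun b => csum n (fun c => H n b c)) =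
        csum n (fun a => csum n (fun b => H a b n + H a n b + H n a b))).
    { rewrite <- csum_plus. apply csum_ext. intros a Ha.
      rewrite <- !csum_plus. reflexivity. }
    rewrite <- Cplus_assoc, E3.
    rewrite (csum_pair n (fun a b => H a b n + H a n b + H n a b)).
    rewrite (csum_zero n (fun a => H a a n + H a n a + H n a a)).
    2:{ intros a Ha. rewrite !H0 by lia. ring. }
    rewrite (csum2_ext n _ (fun _ _ => 2)).
    2:{ intros i j Hij Hj. rewrite <- (H2 i j n) by lia. ring. }
    rewrite csum2_const, S_INR, RtoC_plus. field.
Qed.

Lemma sqrt2_le2 : (sqrt 2 <= 2)%R.
Proof. pose proof (sqrt_sqrt 2) as H. pose proof (sqrt_pos 2). nra. Qed.

Lemma is_derive_C_bound (f : C -> C) (x l : C) (d K : R) :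
  (0 < d)%R -> (0 <= K)%R ->
  (forall y, (Cmod (y - x) < d)%R ->
     (Cmod (f y - f x - (y - x) * l) <= K * (Cmod (y - x) * Cmod (y - x)))%R) ->
  is_derive f x l.
Proof.
  intros Hd HK Hb. split.
  - apply is_linear_scal_l.
  - intros x' Hx'. apply (@is_filter_lim_locally_unique C_AbsRing (AbsRing_NormedModule C_AbsRing)) in Hx'. subst x'.
    intros eps.
    assert (Hr : (0 < Rmin d (eps / (K + 1)) / 2)%R).
    { assert (0 < eps/(K+1))%R by (apply Rdiv_lt_0_compat; [apply cond_pos|lra]).
      pose proof (Rmin_pos d (eps/(K+1)) Hd H). lra. }
    exists (mkposreal _ Hr). intros y Hy.
    change (Cmod (y - x) < Rmin d (eps / (K + 1)) / 2)%R in Hy.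
    assert (Hy2 : (Cmod (y - x) < Rmin d (eps / (K + 1)))%R).
    { pose proof (Cmod_ge_0 (y - x)). lra. }
    assert (Hyd : (Cmod (y - x) < d)%R) by (pose proof (Rmin_l d (eps/(K+1))); lra).
    assert (Hye : (Cmod (y - x) < eps / (K + 1))%R) by (pose proof (Rmin_r d (eps/(K+1))); lra).
    specialize (Hb y Hyd).
    change (Cmod (f y - f x - (y - x) * l) <= eps * Cmod (y - x))%R.
    pose proof (Cmod_ge_0 (y - x)).
    pose proof (cond_pos eps).
    assert (K * Cmod (y - x) <= eps)%R.
    { apply Rmult_lt_compat_l with (r := (K+1)%R) in Hye; [|lra].
      field_simplify in Hye; lra. }
    nra.
Qed.

Lemma exp_bound1 a : (Rabs a <= 1 -> Rabs (exp a - 1) <= 3 * Rabs a)%R.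
Proof.
  intros Ha.
  destruct (MVT_abs exp exp 0 a) as [c [Hc Hcab]].
  { intros c _. apply derivable_pt_lim_exp. }
  rewrite exp_0, Rminus_0_r in Hc. rewrite Hc.
  apply Rmult_le_compat_r. apply Rabs_pos.
  rewrite Rabs_pos_eq by (left; apply exp_pos).
  assert (c <= 1)%R.
  { destruct Hcab as [_ H]. apply Rle_trans with (1 := H).
    apply Rmax_lub. lra. apply Rabs_le_between in Ha; lra. }
  apply Rle_trans with (exp 1). destruct H. left; apply exp_increasing; auto. subst; lra.
  apply exp_le_3.
Qed.

Lemma abs_between a c : (Rmin 0 a <= c <= Rmax 0 a -> Rabs c <= Rabs a)%R.
Proof.
  intros [H1 H2]. unfold Rmin, Rmax in *. destruct (Rle_dec 0 a);
  unfold Rabs; repeat destruct Rcase_abs; lra.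
Qed.

Lemma exp_bound2 a : (Rabs a <= 1 -> Rabs (exp a - 1 - a) <= 3 * (a * a))%R.
Proof.
  intros Ha.
  destruct (MVT_abs (fun t => exp t - 1 - t)%R (fun t => exp t - 1)%R 0 a) as [c [Hc Hcab]].
  { intros c _. apply is_derive_Reals. auto_derive; auto. ring. }
  rewrite exp_0 in Hc. replace (exp a - 1 - a - (1 - 1 - 0))%R with (exp a - 1 - a)%R in Hc by ring.
  rewrite Hc, Rminus_0_r.
  pose proof (abs_between a c Hcab).
  pose proof (exp_bound1 c ltac:(lra)).
  pose proof (Rabs_pos (exp c - 1)). pose proof (Rabs_pos a). pose proof (Rabs_pos c).
  assert (a * a = Rabs a * Rabs a)%R. { rewrite <- Rabs_mult. symmetry; apply Rabs_pos_eq. nra. }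
  nra.
Qed.

Lemma sin_bound1 b : (Rabs (sin b) <= Rabs b)%R.
Proof.
  destruct (MVT_abs sin cos 0 b) as [c [Hc _]].
  { intros c _. apply derivable_pt_lim_sin. }
  rewrite sin_0, !Rminus_0_r in Hc. rewrite Hc.
  pose proof (Rabs_pos b). assert (Rabs (cos c) <= 1)%R by (apply Rabs_le; split; [apply COS_bound| apply COS_bound]).
  nra.
Qed.

Lemma cos_bound1 b : (Rabs (cos b - 1) <= b * b)%R.
Proof.
  destruct (MVT_abs cos (fun t => - sin t)%R 0 b) as [c [Hc Hcab]].
  { intros c _. apply derivable_pt_lim_cos. }
  rewrite cos_0, Rminus_0_r in Hc. rewrite Hc, Rabs_Ropp.
  pose proof (abs_between b c Hcab). pose proof (sin_bound1 c).
  pose proof (Rabs_pos b). pose proof (Rabs_pos (sin c)).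
  assert (b * b = Rabs b * Rabs b)%R. { rewrite <- Rabs_mult. symmetry; apply Rabs_pos_eq. nra. }
  nra.
Qed.

Lemma sin_bound2 b : (Rabs b <= 1 -> Rabs (sin b - b) <= b * b)%R.
Proof.
  intros Hb.
  destruct (MVT_abs (fun t => sin t - t)%R (fun t => cos t - 1)%R 0 b) as [c [Hc Hcab]].
  { intros c _. apply is_derive_Reals. auto_derive; auto. ring. }
  rewrite sin_0 in Hc. replace (sin b - b - (0 - 0))%R with (sin b - b)%R in Hc by ring.
  rewrite Hc, Rminus_0_r.
  pose proof (abs_between b c Hcab). pose proof (cos_bound1 c).
  pose proof (Rabs_pos b). pose proof (Rabs_pos c).
  assert (b * b = Rabs b * Rabs b)%R. { rewrite <- Rabs_mult. symmetry; apply Rabs_pos_eq. nra. }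
  assert (c * c = Rabs c * Rabs c)%R. { rewrite <- Rabs_mult. symmetry; apply Rabs_pos_eq. nra. }
  assert (Rabs (cos c - 1) <= Rabs b)%R by nra.
  nra.
Qed.

Lemma cexp_plus x y : cexp (x + y) = cexp x * cexp y.
Proof.
  destruct x as [a b], y as [c d]. unfold cexp, Cmult, Cplus. simpl.
  rewrite exp_plus, cos_plus, sin_plus. f_equal; ring.
Qed.

Lemma cexp_0 : cexp 0 = 1.
Proof. unfold cexp, RtoC. simpl. rewrite exp_0, cos_0, sin_0. f_equal; ring. Qed.

Lemma cexp_neq0 x : cexp x <> 0.
Proof.
  intros H. assert (cexp x * cexp (- x) = 0) by (rewrite H; ring).
  rewrite <- cexp_plus in H0. replace (x + - x) with (RtoC 0) in H0 by ring.
  rewrite cexp_0 in H0. apply C1_nz. exact H0.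
Qed.

Lemma Cmod_le_sum (c : C) : (Cmod c <= 2 * (Rabs (fst c) + Rabs (snd c)))%R.
Proof.
  pose proof (Cmod_2Rmax c). pose proof sqrt2_le2.
  pose proof (Rabs_pos (fst c)). pose proof (Rabs_pos (snd c)).
  pose proof (sqrt_pos 2).
  assert (Rmax (Rabs (fst c)) (Rabs (snd c)) <= Rabs (fst c) + Rabs (snd c))%R.
  { apply Rmax_lub; lra. }
  change (Re c) with (fst c) in H. change (Im c) with (snd c) in H.
  assert (Rmax (Rabs (fst c)) (Rabs (snd c)) >= 0)%R.
  { pose proof (Rmax_l (Rabs (fst c)) (Rabs (snd c))). lra. }
  nra.
Qed.

Lemma cexp_bound (h : C) : (Cmod h < 1)%R ->
  (Cmod (cexp h - 1 - h) <= 40 * (Cmod h * Cmod h))%R.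
Proof.
  intros Hh. destruct h as [a b].
  pose proof (Rmax_Cmod (a, b)) as Hm. simpl in Hm.
  assert (Ha : (Rabs a <= 1)%R) by (pose proof (Rmax_l (Rabs a) (Rabs b)); lra).
  assert (Hb : (Rabs b <= 1)%R) by (pose proof (Rmax_r (Rabs a) (Rabs b)); lra).
  assert (E : cexp (a, b) - 1 - (a, b) =
              ((exp a - 1 - a) * cos b + (1 + a) * (cos b - 1),
               (exp a - 1) * sin b + (sin b - b))%R).
  { unfold cexp, Cminus, Cplus, Copp. simpl. f_equal; ring. }
  rewrite E. eapply Rle_trans. apply Cmod_le_sum. simpl.
  assert (H2 : (Cmod (a, b) * Cmod (a, b) = a * a + b * b)%R).
  { pose proof (Cmod2_alt (a, b)). simpl in H. rewrite !Rmult_1_r in H. exact H. }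
  rewrite H2.
  pose proof (exp_bound1 a Ha). pose proof (exp_bound2 a Ha).
  pose proof (cos_bound1 b). pose proof (sin_bound2 b Hb). pose proof (sin_bound1 b).
  assert (Rabs (cos b) <= 1)%R by (apply Rabs_le; split; apply COS_bound).
  assert (Rabs (1 + a) <= 2)%R by (apply Rabs_le_between in Ha; apply Rabs_le; split; lra).
  pose proof (Rabs_triang ((exp a - 1 - a) * cos b) ((1 + a) * (cos b - 1))) as T1.
  pose proof (Rabs_triang ((exp a - 1) * sin b) (sin b - b)) as T2.
  rewrite !Rabs_mult in T1, T2.
  pose proof (Rabs_pos (exp a - 1 - a)). pose proof (Rabs_pos (cos b - 1)).
  pose proof (Rabs_pos (exp a - 1)). pose proof (Rabs_pos (sin b)).
  pose proof (Rabs_pos a). pose proof (Rabs_pos b). pose proof (Rabs_pos (cos b)).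
  assert (Rabs a * Rabs b <= a * a + b * b)%R.
  { assert (a * a = Rabs a * Rabs a)%R by (rewrite <- Rabs_mult; symmetry; apply Rabs_pos_eq; nra).
    assert (b * b = Rabs b * Rabs b)%R by (rewrite <- Rabs_mult; symmetry; apply Rabs_pos_eq; nra).
    nra. }
  assert (Rabs (exp a - 1 - a) * Rabs (cos b) <= 3 * (a * a))%R by nra.
  assert (Rabs (1 + a) * Rabs (cos b - 1) <= 2 * (b * b))%R by nra.
  assert (Rabs (exp a - 1) * Rabs (sin b) <= 3 * (Rabs a * Rabs b))%R by nra.
  rewrite Rabs_mult in T1. assert (0 <= a*a)%R by nra. assert (0 <= b*b)%R by nra. lra.
Qed.

Lemma D_cexp x : is_derive cexp x (cexp x).
Proof.
  apply (is_derive_C_bound _ _ _ 1 (40 * Cmod (cexp x))); [lra| pose proof (Cmod_ge_0 (cexp x)); lra|].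
  intros y Hy.
  replace (cexp y - cexp x - (y - x) * cexp x) with (cexp x * (cexp (y - x) - 1 - (y - x))).
  2:{ assert (cexp y = cexp x * cexp (y - x)) as ->. { rewrite <- cexp_plus. f_equal. ring. } ring. }
  rewrite Cmod_mult. pose proof (cexp_bound (y - x) Hy). pose proof (Cmod_ge_0 (cexp x)).
  nra.
Qed.

Lemma D_inv (x : C) : x <> 0 -> is_derive Cinv x (- / (x * x)).
Proof.
  intros Hx. pose proof (proj1 (Cmod_gt_0 x) Hx) as Hx0.
  apply (is_derive_C_bound _ _ _ (Cmod x / 2) (2 / (Cmod x * Cmod x * Cmod x))).
  lra. apply Rlt_le, Rdiv_lt_0_compat; [lra|]. apply Rmult_lt_0_compat; [nra|lra].
  intros y Hy.
  assert (Hxy : (Cmod x <= Cmod y + Cmod (y - x))%R).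
  { replace x with (y + - (y - x)) at 1 by ring. eapply Rle_trans. apply Cmod_triangle.
    rewrite Cmod_opp. lra. }
  assert (Hy0 : y <> 0).
  { intros ->. rewrite Cmod_0 in Hxy. lra. }
  pose proof (proj1 (Cmod_gt_0 y) Hy0) as Hy1.
  replace (/ y - / x - (y - x) * - / (x * x)) with ((y - x) * (y - x) / (x * x * y)) by (field; auto).
  rewrite Cmod_div. 2:{ repeat apply Cmult_neq_0; auto. }
  rewrite !Cmod_mult.
  pose proof (Cmod_ge_0 (y - x)).
  set (u := (Cmod (y - x) * Cmod (y - x))%R).
  assert (0 <= u)%R by (unfold u; nra).
  assert (Cmod x / 2 <= Cmod y)%R by lra.
  assert (Hinv : (/ (Cmod x * Cmod x * Cmod y) <= 2 / (Cmod x * Cmod x * Cmod x))%R).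
  { replace (2 / (Cmod x * Cmod x * Cmod x))%R with (/ (Cmod x * Cmod x * (Cmod x / 2)))%R
      by (field; lra).
    apply Rinv_le_contravar. apply Rmult_lt_0_compat; [nra|lra].
    apply Rmult_le_compat_l; [nra| lra]. }
  unfold Rdiv at 1. nra.
Qed.

Lemma is_derive_AR (f : C -> C) (x l : C) : @is_derive C_AbsRing (AbsRing_NormedModule C_AbsRing) f x l -> @is_derive C_AbsRing C_NormedModule f x l.
Proof. intros [_ H]. split. apply is_linear_scal_l. intros x' Hx'. exact (H x' Hx'). Qed.
Lemma is_derive_RA (f : C -> C) (x l : C) : @is_derive C_AbsRing C_NormedModule f x l -> @is_derive C_AbsRing (AbsRing_NormedModule C_AbsRing) f x l.
Proof. intros [_ H]. split. apply is_linear_scal_l. intros x' Hx'. exact (H x' Hx'). Qed.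

Lemma D_plus (f g : C -> C) x a b : is_derive f x a -> is_derive g x b ->
  is_derive (fun w => f w + g w) x (a + b).
Proof. intros Ha Hb. exact (is_derive_plus f g x a b Ha Hb). Qed.

Lemma D_minus (f g : C -> C) x a b : is_derive f x a -> is_derive g x b ->
  is_derive (fun w => f w - g w) x (a - b).
Proof. intros Ha Hb. exact (is_derive_minus f g x a b Ha Hb). Qed.

Lemma D_mult (f g : C -> C) x a b : is_derive f x a -> is_derive g x b ->
  is_derive (fun w => f w * g w) x (a * g x + f x * b).
Proof. intros Ha Hb. apply is_derive_AR.
  exact (is_derive_mult f g x a b (is_derive_RA _ _ _ Ha) (is_derive_RA _ _ _ Hb) Cmult_comm). Qed.

Lemma D_const (c : C) (x : C) : is_derive (fun _ : C => c) x (RtoC 0).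
Proof. exact (is_derive_const c x). Qed.

Lemma D_id (x : C) : is_derive (fun w : C => w) x (RtoC 1).
Proof. apply is_derive_AR. exact (is_derive_id x). Qed.

Lemma D_comp (f g : C -> C) x a b : is_derive f (g x) a -> is_derive g x b ->
  is_derive (fun w => f (g w)) x (b * a).
Proof. intros Ha Hb. exact (is_derive_comp f g x a b Ha (is_derive_RA _ _ _ Hb)). Qed.

Lemma D_ext (f g : C -> C) x a : (forall w, f w = g w) -> is_derive f x a -> is_derive g x a.
Proof. intros E H. apply (is_derive_ext f g x a E H). Qed.

Lemma D_ext_loc (f g : C -> C) x a : locally x (fun w => f w = g w) -> is_derive f x a -> is_derive g x a.
Proof. intros E H. apply (is_derive_ext_loc f g x a); [|exact H]. first [apply locally_C; exact E | apply (proj2 (locally_C x _)); exact E | apply (proj1 (locally_C x _)); exact E]. Qed.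

Lemma D_eq (f : C -> C) (x a b : C) : is_derive f x a -> a = b -> is_derive f x b.
Proof. intros H ->; exact H. Qed.

Lemma D_unique (f : C -> C) x a b : is_derive f x a -> is_derive f x b -> a = b.
Proof. intros Ha Hb. rewrite <- (is_C_derive_unique f x a Ha). apply is_C_derive_unique; auto. Qed.

Lemma D_cexp_comp (f : C -> C) x a : is_derive f x a ->
  is_derive (fun w => cexp (f w)) x (a * cexp (f x)).
Proof. intros H. apply (D_comp cexp f x); auto. apply D_cexp. Qed.

Lemma D_inv_comp (f : C -> C) x a : is_derive f x a -> f x <> 0 ->
  is_derive (fun w => / f w) x (- a / (f x * f x)).
Proof. intros H Hf.
  assert (E : a * - / (f x * f x) = - a / (f x * f x)) by (field; auto).
  rewrite <- E. apply (D_comp Cinv f x); auto. apply D_inv; auto. Qed.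

Lemma lc2 (a b p1 q1 p2 q2 c1 c2 : C) : p1 = q1 -> p2 = q2 ->
  a - b = c1 * (p1 - q1) + c2 * (p2 - q2) -> a = b.
Proof. intros -> -> H. apply Ceq_minus. rewrite H. ring. Qed.

Lemma lc3 (a b p1 q1 p2 q2 p3 q3 c1 c2 c3 : C) : p1 = q1 -> p2 = q2 -> p3 = q3 ->
  a - b = c1 * (p1 - q1) + c2 * (p2 - q2) + c3 * (p3 - q3) -> a = b.
Proof. intros -> -> -> H. apply Ceq_minus. rewrite H. ring. Qed.

Lemma pair_id (Xi Xj Wi Wj P mu : C) : Xi - Xj <> 0 ->
  Wi * Wi = Xi * Xi - 4 -> Wj * Wj = Xj * Xj - 4 ->
  P = ((Xi * Xi + Xj * Xj - 8) / ((Xi - Xj) * (Xi - Xj)) - 1) / 2 ->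
  mu * mu * (Wi / (Xi - Xj) * (Wi / (Xi - Xj)) + Wj / (Xj - Xi) * (Wj / (Xj - Xi)))
  + mu * ((Xi / (Xi - Xj) - Wi * Wi / ((Xi - Xj) * (Xi - Xj)))
          + (Xj / (Xj - Xi) - Wj * Wj / ((Xj - Xi) * (Xj - Xi))))
  + 2 * mu * (1 - mu) * P = mu * mu.
Proof.
  intros HD Hi Hj HP.
  assert (HD' : Xj - Xi <> 0). { intros E. apply HD. replace (Xi - Xj) with (- (Xj - Xi)) by ring. rewrite E. ring. }
  apply (lc3 _ _ _ _ _ _ _ _ ((mu * mu - mu) / ((Xi - Xj) * (Xi - Xj)))
           ((mu * mu - mu) / ((Xi - Xj) * (Xi - Xj))) (2 * mu * (1 - mu)) Hi Hj HP).
  field; repeat split; auto.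
Qed.

Lemma triple_id (Xa Xb Xc Wa Wb Wc : C) : Xa - Xb <> 0 -> Xb - Xc <> 0 -> Xa - Xc <> 0 ->
  Wa * Wa = Xa * Xa - 4 -> Wb * Wb = Xb * Xb - 4 -> Wc * Wc = Xc * Xc - 4 ->
  Wa / (Xa - Xb) * (Wa / (Xa - Xc)) + Wa / (Xa - Xc) * (Wa / (Xa - Xb))
  + Wb / (Xb - Xa) * (Wb / (Xb - Xc)) + Wb / (Xb - Xc) * (Wb / (Xb - Xa))
  + Wc / (Xc - Xa) * (Wc / (Xc - Xb)) + Wc / (Xc - Xb) * (Wc / (Xc - Xa)) = 2.
Proof.
  intros H1 H2 H3 Ha Hb Hc.
  assert (H1' : Xb - Xa <> 0). { intros E. apply H1. replace (Xa - Xb) with (- (Xb - Xa)) by ring. rewrite E. ring. }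
  assert (H2' : Xc - Xb <> 0). { intros E. apply H2. replace (Xb - Xc) with (- (Xc - Xb)) by ring. rewrite E. ring. }
  assert (H3' : Xc - Xa <> 0). { intros E. apply H3. replace (Xa - Xc) with (- (Xc - Xa)) by ring. rewrite E. ring. }
  apply (lc3 _ _ _ _ _ _ _ _ (2 / ((Xa - Xb) * (Xa - Xc))) (2 / ((Xb - Xa) * (Xb - Xc)))
     (2 / ((Xc - Xa) * (Xc - Xb))) Ha Hb Hc).
  field; repeat split; auto.
Qed.

Lemma csum_scal_r n c (f : nat -> C) : csum n (fun k => f k * c) = csum n f * c.
Proof. rewrite Cmult_comm, <- csum_scal. apply csum_ext. intros; ring. Qed.

Lemma csum2_plus n (f g : nat -> nat -> C) : csum2 n (fun i j => f i j + g i j) = csum2 n f + csum2 n g.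
Proof. unfold csum2. rewrite <- csum_plus. apply csum_ext. intros. apply csum_plus. Qed.

Lemma csum2_scal n c (f : nat -> nat -> C) : csum2 n (fun i j => c * f i j) = c * csum2 n f.
Proof. unfold csum2. rewrite <- csum_scal. apply csum_ext. intros. apply csum_scal. Qed.

Lemma csum_delta n j (c : C) : (j < n)%nat -> csum n (fun k => if Nat.eqb k j then c else 0) = c.
Proof.
  induction n; intros Hj. lia.
  rewrite csum_S. destruct (Nat.eq_dec j n) as [->|Hne].
  - rewrite Nat.eqb_refl. rewrite csum_zero. ring.
    intros k Hk. destruct (Nat.eqb_spec k n); [lia|reflexivity].
  - rewrite IHn by lia. destruct (Nat.eqb_spec n j); [lia|]. ring.
Qed.

Lemma csum_split_at n j (f : nat -> C) : (j < n)%nat ->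
  csum n f = f j + csum n (fun k => if Nat.eqb k j then 0 else f k).
Proof.
  intros Hj. rewrite <- (csum_delta n j (f j) Hj), <- csum_plus. apply csum_ext.
  intros k Hk. destruct (Nat.eqb_spec k j). subst; ring. ring.
Qed.

Definition xv (z : nat -> C) i := z i + / z i.
Definition wv (z : nat -> C) i := z i - / z i.
Definition tv (z : nat -> C) r j := if Nat.eqb j r then RtoC 0 else wv z r / (xv z r - xv z j).
Definition uv (z : nat -> C) r j := if Nat.eqb j r then RtoC 0 else
  xv z r / (xv z r - xv z j) - wv z r * wv z r / ((xv z r - xv z j) * (xv z r - xv z j)).
Definition cv (z : nat -> C) r := (z r + 1) / (2 * (z r - 1)).

Lemma L1 (z : nat -> C) i : z i <> 0 -> z i - 1 <> 0 -> cv z i * wv z i = (xv z i + 2) / 2.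
Proof. intros. unfold cv, wv, xv. field; repeat split; auto. Qed.

Lemma L2 (z : nat -> C) i : z i <> 0 -> wv z i * wv z i = xv z i * xv z i - 4.
Proof. intros. unfold wv, xv. field; repeat split; auto. Qed.

Lemma L3 (z : nat -> C) i j : z i <> 0 -> z j <> 0 -> xv z i - xv z j <> 0 ->
  z i * z j / ((z i - z j) * (z i - z j)) + z i * z j / ((z i * z j - 1) * (z i * z j - 1))
  = ((xv z i * xv z i + xv z j * xv z j - 8) / ((xv z i - xv z j) * (xv z i - xv z j)) - 1) / 2.
Proof.
  intros Hi Hj Hx.
  assert (E : xv z i - xv z j = (z i - z j) * (z i * z j - 1) / (z i * z j)).
  { unfold xv. field; repeat split; auto. }
  assert (H1 : z i - z j <> 0). { intros H. apply Hx. rewrite E, H. field; repeat split; auto. }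
  assert (H2 : z i * z j - 1 <> 0). { intros H. apply Hx. rewrite E, H. field; repeat split; auto. }
  rewrite E. unfold xv. field. repeat split; auto.
Qed.

Lemma neq_sym_C (a b : C) : a - b <> 0 -> b - a <> 0.
Proof. intros H E. apply H. replace (a - b) with (- (b - a)) by ring. rewrite E. ring. Qed.

Section Final.
Variables (n : nat) (z : nat -> C) (mu1 mu2 : C).
Hypothesis Hz0 : forall k, (k < n)%nat -> z k <> 0.
Hypothesis Hz1 : forall k, (k < n)%nat -> z k - 1 <> 0.
Hypothesis Hx : forall i j, (i < n)%nat -> (j < n)%nat -> i <> j -> xv z i - xv z j <> 0.

Lemma tv_diag r : tv z r r = 0.
Proof. unfold tv. rewrite Nat.eqb_refl. reflexivity. Qed.

Lemma tv_off r j : j <> r -> tv z r j = wv z r / (xv z r - xv z j).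
Proof. intros H. unfold tv. destruct (Nat.eqb_spec j r); [lia|reflexivity]. Qed.

Lemma uv_off r j : j <> r -> uv z r j =
  xv z r / (xv z r - xv z j) - wv z r * wv z r / ((xv z r - xv z j) * (xv z r - xv z j)).
Proof. intros H. unfold uv. destruct (Nat.eqb_spec j r); [lia|reflexivity]. Qed.

Lemma uv_diag r : uv z r r = 0.
Proof. unfold uv. rewrite Nat.eqb_refl. reflexivity. Qed.

Lemma final_alg :
  csum n (fun r => (mu1 * cv z r + mu2 * csum n (fun j => tv z r j))
                   * (mu1 * cv z r + mu2 * csum n (fun j => tv z r j))
                   + mu1 * (- (z r / ((z r - 1) * (z r - 1))))
                   + mu2 * csum n (fun j => uv z r j))
  + (mu1 * (1 - mu1) * csum n (fun r => z r / ((z r - 1) * (z r - 1)))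
     + 2 * mu2 * (1 - mu2) *
       (csum2 n (fun i j => z i * z j / ((z i - z j) * (z i - z j)))
        + csum2 n (fun i j => z i * z j / ((z i * z j - 1) * (z i * z j - 1)))))
  = INR n * mu1 * mu1 / 4
    + INR n * (INR n - 1) / 2 * mu1 * mu2
    + INR n * (INR n - 1) * (2 * INR n - 1) * mu2 * mu2 / 6.
Proof.
  set (q := fun r => z r / ((z r - 1) * (z r - 1))).
  set (P1 := fun i j => z i * z j / ((z i - z j) * (z i - z j))).
  set (P2 := fun i j => z i * z j / ((z i * z j - 1) * (z i * z j - 1))).
  set (H3 := fun r j k => if Nat.eqb k j then RtoC 0 else tv z r j * tv z r k).
  rewrite (csum_ext n _ (fun r =>
     (mu1 * mu1 * (cv z r * cv z r) + mu1 * (- q r))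
     + 2 * mu1 * mu2 * csum n (fun j => cv z r * tv z r j)
     + mu2 * mu2 * (csum n (fun j => tv z r j * tv z r j) + csum n (fun j => csum n (fun k => H3 r j k)))
     + mu2 * csum n (fun j => uv z r j))).
  2:{ intros r Hr. rewrite csum_scal. rewrite <- csum_plus.
      rewrite (csum_ext n (fun j => tv z r j * tv z r j + csum n (fun k => H3 r j k))
                 (fun j => tv z r j * csum n (fun k => tv z r k))).
      rewrite csum_scal_r. unfold q. change (csum n (tv z r)) with (csum n (fun j : nat => tv z r j)). ring.
      intros j Hj. rewrite (csum_split_at n j (fun k => tv z r k)) by exact Hj.
      rewrite Cmult_plus_distr_l, <- csum_scal. unfold H3. f_equal. apply csum_ext.
      intros k Hk. destruct (Nat.eqb k j); ring. }
  rewrite !csum_plus.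
  assert (EA : csum n (fun r => mu1 * mu1 * (cv z r * cv z r) + mu1 * - q r) =
               INR n * (mu1 * mu1 / 4) - mu1 * (1 - mu1) * csum n q).
  { rewrite <- csum_scal, <- csum_const.
    apply (lc2 _ _ (csum n (fun r => mu1 * mu1 * (cv z r * cv z r) + mu1 * - q r) + csum n (fun k => mu1 * (1 - mu1) * q k))
                   (csum n (fun _ => mu1 * mu1 / 4)) 0 0 1 0).
    2: reflexivity. 2: ring.
    rewrite <- csum_plus. apply csum_ext. intros r Hr. unfold q, cv.
    field; repeat split; auto. }
  assert (EB : csum n (fun r => 2 * mu1 * mu2 * csum n (fun j => cv z r * tv z r j)) =
               2 * mu1 * mu2 * (INR n * (INR n - 1) / 2 * (1 / 2))).
  { rewrite csum_scal, csum_pair. rewrite (csum_zero n (fun a => cv z a * tv z a a)).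
    2:{ intros; rewrite tv_diag; ring. }
    rewrite (csum2_ext n _ (fun _ _ => 1 / 2)). rewrite csum2_const. ring.
    intros i j Hij Hj. rewrite tv_off by lia. rewrite tv_off by lia.
    assert (Hxij : xv z i - xv z j <> 0) by (apply Hx; lia).
    pose proof (neq_sym_C _ _ Hxij).
    replace (cv z i * (wv z i / (xv z i - xv z j))) with ((cv z i * wv z i) / (xv z i - xv z j))
      by (unfold Cdiv; ring).
    replace (cv z j * (wv z j / (xv z j - xv z i))) with ((cv z j * wv z j) / (xv z j - xv z i))
      by (unfold Cdiv; ring).
    rewrite !L1 by (apply Hz0 || apply Hz1; lia). field. split; auto. }
  assert (ET : csum n (fun r => csum n (fun j => csum n (fun k => H3 r j k))) =
               INR n * (INR n - 1) * (INR n - 2) / 3).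
  { apply csum_triple.
    - intros a b c Ha Hb Hc Hor. unfold H3.
      destruct (Nat.eqb_spec c b). reflexivity.
      destruct Hor as [ -> | [ -> | -> ] ]. rewrite tv_diag; ring. lia. rewrite tv_diag; ring.
    - intros a b c Ha Hb Hc Hab Hbc Hac. unfold H3.
      repeat match goal with |- context [Nat.eqb ?u ?v] =>
        destruct (Nat.eqb_spec u v); [lia|] end.
      rewrite !tv_off by lia.
      apply triple_id; try (apply Hx; lia); apply L2; apply Hz0; lia. }
  assert (ED : mu2 * mu2 * csum n (fun r => csum n (fun j => tv z r j * tv z r j))
               + csum n (fun r => mu2 * csum n (fun j => uv z r j))
               + 2 * mu2 * (1 - mu2) * (csum2 n P1 + csum2 n P2)
               = INR n * (INR n - 1) / 2 * (mu2 * mu2)).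
  { rewrite <- csum2_const.
    rewrite (csum_ext n (fun r => mu2 * csum n (fun j => uv z r j))
               (fun r => csum n (fun j => mu2 * uv z r j))) by (intros; symmetry; apply csum_scal).
    rewrite <- csum_scal.
    rewrite (csum_ext n (fun k => mu2 * mu2 * csum n (fun j => tv z k j * tv z k j))
               (fun r => csum n (fun j => mu2 * mu2 * (tv z r j * tv z r j)))) by (intros; symmetry; apply csum_scal).
    rewrite <- csum_plus.
    rewrite (csum_ext n _ (fun r => csum n (fun j => mu2 * mu2 * (tv z r j * tv z r j) + mu2 * uv z r j)))
      by (intros; symmetry; apply csum_plus).
    rewrite csum_pair. rewrite csum_zero.
    2:{ intros; rewrite tv_diag, uv_diag; ring. }
    rewrite Cplus_0_l, <- (csum2_plus n P1 P2), <- csum2_scal, <- csum2_plus.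
    apply csum2_ext. intros i j Hij Hj.
    rewrite !tv_off by lia. rewrite !uv_off by lia.
    assert (Hxij : xv z i - xv z j <> 0) by (apply Hx; lia).
    pose proof (pair_id (xv z i) (xv z j) (wv z i) (wv z j) (P1 i j + P2 i j) mu2 Hxij
                 (L2 z i ltac:(apply Hz0; lia)) (L2 z j ltac:(apply Hz0; lia))
                 ltac:(apply L3; auto; apply Hz0; lia)) as HP.
    etransitivity; [| exact HP]. ring. }
  assert (EA' : csum n (fun k => mu1 * mu1 * (cv z k * cv z k)) + csum n (fun k => mu1 * - q k)
     = INR n * (mu1 * mu1 / 4) - mu1 * (1 - mu1) * csum n q).
  { rewrite <- EA, <- csum_plus. reflexivity. }
  assert (EC : csum n (fun k => mu2 * mu2 * (csum n (fun j => tv z k j * tv z k j) +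
      csum n (fun j => csum n (fun k0 => H3 k j k0)))) =
      mu2 * mu2 * (csum n (fun r => csum n (fun j => tv z r j * tv z r j)) +
                   csum n (fun r => csum n (fun j => csum n (fun k => H3 r j k))))).
  { rewrite csum_scal, csum_plus. reflexivity. }
  rewrite EA', EB, EC.
  apply (lc2 _ _ _ _ _ _ 1 (mu2 * mu2) ED ET). field.
Qed.
End Final.

Lemma upd_eq (y : nat -> C) r w : upd y r w r = w.
Proof. unfold upd. rewrite Nat.eqb_refl. reflexivity. Qed.

Lemma upd_neq (y : nat -> C) r w k : k <> r -> upd y r w k = y k.
Proof. intros H. unfold upd. destruct (Nat.eqb_spec k r); [lia|reflexivity]. Qed.

Lemma upd_id (y : nat -> C) r : upd y r (y r) = y.
Proof. apply functional_extensionality. intros k. unfold upd. destruct (Nat.eqb_spec k r); subst; reflexivity. Qed.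

Lemma D_scal (c : C) (f : C -> C) x a : is_derive f x a -> is_derive (fun w => c * f w) x (c * a).
Proof. intros H. replace (c * a) with (RtoC 0 * f x + c * a) by ring. apply (D_mult (fun _ => c) f). apply D_const. exact H. Qed.

Lemma D_csum n (F : nat -> C -> C) x (d : nat -> C) :
  (forall k, (k < n)%nat -> is_derive (F k) x (d k)) ->
  is_derive (fun w => csum n (fun k => F k w)) x (csum n d).
Proof.
  induction n; intros H.
  - apply (D_ext (fun _ => RtoC 0)). intros; reflexivity. apply D_const.
  - apply (D_ext (fun w => csum n (fun k => F k w) + F n w)).
    intros w. rewrite csum_S. reflexivity.
    rewrite csum_S. apply D_plus. apply IHn. intros; apply H; lia. apply H; lia.
Qed.

Lemma D_csum2 n (F : nat -> nat -> C -> C) x (d : nat -> nat -> C) :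
  (forall i j, (i < j)%nat -> (j < n)%nat -> is_derive (F i j) x (d i j)) ->
  is_derive (fun w => csum2 n (fun i j => F i j w)) x (csum2 n d).
Proof.
  intros H. unfold csum2. apply (D_csum n (fun j w => csum j (fun i => F i j w))).
  intros j Hj. apply (D_csum j (fun i w => F i j w)). intros i Hi. apply H; lia.
Qed.

Lemma deriv_of_cexp (f g : C -> C) (x : C) d g' : is_derive f x d -> is_derive g x g' ->
  locally x (fun w => cexp (f w) = g w) -> d * cexp (f x) = g'.
Proof.
  intros Hf Hg Hl. apply (D_unique g x). 2: exact Hg.
  apply (D_ext_loc (fun w => cexp (f w))). exact Hl. apply D_cexp_comp. exact Hf.
Qed.

Lemma deriv_of_cexp2 (f g : C -> C) (x : C) d g' : is_derive f x d -> is_derive g x g' ->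
  locally x (fun w => cexp (f w) * cexp (f w) = g w) ->
  d * cexp (f x) * cexp (f x) + cexp (f x) * (d * cexp (f x)) = g'.
Proof.
  intros Hf Hg Hl. apply (D_unique g x). 2: exact Hg.
  apply (D_ext_loc (fun w => cexp (f w) * cexp (f w))). exact Hl.
  apply (D_mult (fun w => cexp (f w)) (fun w => cexp (f w))); apply D_cexp_comp; exact Hf.
Qed.

Lemma solve_lin (d c v : C) : d * c = v -> c <> 0 -> d = v / c.
Proof. intros H Hc. rewrite <- H. field. exact Hc. Qed.

Lemma pderiv_eq (f : (nat -> C) -> C) r y d :
  is_derive (fun w => f (upd y r w)) (y r) d -> pderiv f r y = d.
Proof.
  intros H. unfold pderiv.
  pose proof (epsilon_spec (inhabits (RtoC 0))
      (fun d0 : C => is_derive (fun w : C => f (upd y r w)) (y r) d0) (ex_intro _ d H)) as He.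
  exact (D_unique _ _ _ _ He H).
Qed.

Lemma Cmult_integral (a b : C) : a * b = 0 -> a = 0 \/ b = 0.
Proof.
  intros H. destruct (Ceq_dec a 0) as [Ha|Ha]. left; exact Ha. right.
  replace b with (/ a * (a * b)) by (field; exact Ha). rewrite H. ring.
Qed.

Lemma Cmult_neq0' (a b : C) : a <> 0 -> b <> 0 -> a * b <> 0.
Proof. intros Ha Hb E. apply Cmult_integral in E. destruct E; auto. Qed.

Definition dl (y : nat -> C) (r k : nat) : C :=
  if Nat.eqb k r then (y r + 1) / (2 * y r * (y r - 1)) else 0.
Definition dm (y : nat -> C) (i j k : nat) : C :=
  if Nat.eqb k i then (1 - / (y i * y i)) / (xv y i - xv y j)
  else if Nat.eqb k j then - ((1 - / (y j * y j)) / (xv y i - xv y j)) else 0.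

Definition Aval n mu1 mu2 (y : nat -> C) r :=
  mu1 * csum n (fun k => dl y k r) + mu2 * csum2 n (fun i j => dm y i j r).
Definition a_val n mu1 mu2 (y : nat -> C) r :=
  mu1 * cv y r + mu2 * csum n (fun j => tv y r j).

Definition bfun n mu1 mu2 (z : nat -> C) r (w : C) :=
  mu1 * ((w + 1) / (2 * (w - 1))) +
  mu2 * csum n (fun j => if Nat.eqb j r then RtoC 0 else (w - / w) / ((w + / w) - xv z j)).
Definition bd n mu1 mu2 (z : nat -> C) r :=
  mu1 * (- / ((z r - 1) * (z r - 1))) + mu2 * csum n (fun j => uv z r j / z r).

Lemma a_val_upd n mu1 mu2 (z : nat -> C) r w :
  a_val n mu1 mu2 (upd z r w) r = bfun n mu1 mu2 z r w.
Proof.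
  unfold a_val, bfun, cv. rewrite upd_eq. f_equal. f_equal. apply csum_ext.
  intros j Hj. unfold tv. destruct (Nat.eqb_spec j r). reflexivity.
  unfold wv, xv. rewrite upd_eq, upd_neq by auto. reflexivity.
Qed.

Section Main.
Variables (n : nat) (mu1 mu2 : C) (U : (nat -> C) -> Prop)
  (s l : nat -> (nat -> C) -> C) (m : nat -> nat -> (nat -> C) -> C).
Hypothesis HU : coord_open n U.
Hypothesis Hz : forall z, U z -> forall r, (r < n)%nat -> z r <> RtoC 0.
Hypothesis Hs : forall z, U z -> forall r, (r < n)%nat -> s r z * s r z = z r.
Hypothesis Hl : forall z, U z -> forall r, (r < n)%nat -> cexp (l r z) = s r z - / s r z.
Hypothesis Hld : forall z, U z -> forall r k, (r < n)%nat -> (k < n)%nat -> pdiff (l r) k z.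
Hypothesis Hm : forall z, U z -> forall i j, (i < j)%nat -> (j < n)%nat ->
     cexp (m i j z) = z i + / z i - z j - / z j.
Hypothesis Hmd : forall z, U z -> forall i j k, (i < j)%nat -> (j < n)%nat -> (k < n)%nat ->
     pdiff (m i j) k z.

Lemma Ul_sq y r : U y -> (r < n)%nat -> cexp (l r y) * cexp (l r y) = y r - 2 + / y r.
Proof.
  intros Hy Hr. rewrite Hl by auto. rewrite <- (Hs y Hy r Hr).
  assert (s r y <> 0). { intros E. apply (Hz y Hy r Hr). rewrite <- (Hs y Hy r Hr), E. ring. }
  field. auto.
Qed.

Lemma Uz1 y r : U y -> (r < n)%nat -> y r - 1 <> 0.
Proof.
  intros Hy Hr E. pose proof (Ul_sq y r Hy Hr) as H.
  assert (y r = 1) by (apply Ceq_minus; exact E).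
  rewrite H0 in H. replace (RtoC 1 - 2 + / 1) with (RtoC 0) in H.
  apply (cexp_neq0 (l r y)). apply Cmult_integral in H. destruct H; auto.
  field.
Qed.

Lemma Ux y i j : U y -> (i < n)%nat -> (j < n)%nat -> i <> j -> xv y i - xv y j <> 0.
Proof.
  intros Hy Hi Hj Hij.
  destruct (Nat.lt_total i j) as [H|[H|H]]; [| lia |].
  - pose proof (Hm y Hy i j H Hj) as E. unfold xv.
    replace (y i + / y i - (y j + / y j)) with (y i + / y i - y j - / y j) by ring.
    rewrite <- E. apply cexp_neq0.
  - apply neq_sym_C. pose proof (Hm y Hy j i H Hi) as E. unfold xv.
    replace (y j + / y j - (y i + / y i)) with (y j + / y j - y i - / y i) by ring.
    rewrite <- E. apply cexp_neq0.
Qed.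

Lemma loc_upd y k P : U y -> (k < n)%nat ->
  (forall w, U (upd y k w) -> P w) -> locally (y k) P.
Proof.
  intros Hy Hk HP. eapply filter_imp. 2: exact (HU y Hy k Hk). intros w Hw. apply HP; exact Hw.
Qed.

Lemma deriv_l y r k : U y -> (r < n)%nat -> (k < n)%nat ->
  is_derive (fun w => l r (upd y k w)) (y k) (dl y r k).
Proof.
  intros Hy Hr Hk. destruct (Hld y Hy r k Hr Hk) as [d Hd].
  enough (d = dl y r k) by (subst; exact Hd).
  pose proof (Hz y Hy r Hr) as Hyr. pose proof (Uz1 y r Hy Hr) as Hyr1.
  pose proof (cexp_neq0 (l r y)) as HE.
  unfold dl. destruct (Nat.eqb_spec k r) as [->|Hne].
  - assert (Hdw : exists g' : C, is_derive (fun w => w - 2 + / w) (y r) g' /\ g' = 1 - / (y r * y r)).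
    { eexists; split.
      - apply D_plus. apply D_minus. apply D_id. apply D_const. apply (D_inv_comp (fun w => w)). apply D_id. exact Hyr.
      - field. exact Hyr. }
    destruct Hdw as [g' [Hdw Hg']].
    assert (Hloc : locally (y r) (fun w => cexp (l r (upd y r w)) * cexp (l r (upd y r w)) = w - 2 + / w)).
    { apply (loc_upd y r); auto. intros w Hw. rewrite (Ul_sq _ r Hw Hr). rewrite upd_eq. reflexivity. }
    pose proof (deriv_of_cexp2 _ _ _ _ _ Hd Hdw Hloc) as Eq.
    simpl in Eq. rewrite upd_id in Eq.
    pose proof (Ul_sq y r Hy Hr) as Hsq.
    assert (E2 : d * (2 * (y r - 2 + / y r)) = 1 - / (y r * y r)).
    { rewrite <- Hsq, <- Hg', <- Eq. ring. }
    assert (Hc : 2 * (y r - 2 + / y r) <> 0).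
    { rewrite <- Hsq. apply Cmult_neq0'. intros E0. injection E0; lra. apply Cmult_neq0'; auto. }
    apply solve_lin in E2; [|exact Hc]. rewrite E2.
    field. repeat split; auto. replace ((y r - 2) * y r + 1) with ((y r - 1) * (y r - 1)) by ring. apply Cmult_neq0'; auto.
  - assert (Hloc : locally (y k) (fun w => cexp (l r (upd y k w)) * cexp (l r (upd y k w)) = y r - 2 + / y r)).
    { apply (loc_upd y k); auto. intros w Hw. rewrite (Ul_sq _ r Hw Hr). rewrite upd_neq by auto. reflexivity. }
    pose proof (deriv_of_cexp2 _ _ _ _ _ Hd (D_const (y r - 2 + / y r) (y k)) Hloc) as Eq.
    simpl in Eq. rewrite upd_id in Eq.
    assert (E2 : d * (2 * (cexp (l r y) * cexp (l r y))) = 0) by (rewrite <- Eq; ring).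
    apply Cmult_integral in E2. destruct E2 as [E2|E2]. exact E2.
    exfalso. apply Cmult_integral in E2. destruct E2 as [E2|E2]. injection E2; lra.
    apply Cmult_integral in E2. destruct E2; auto.
Qed.

Lemma deriv_m y i j k : U y -> (i < j)%nat -> (j < n)%nat -> (k < n)%nat ->
  is_derive (fun w => m i j (upd y k w)) (y k) (dm y i j k).
Proof.
  intros Hy Hij Hj Hk. destruct (Hmd y Hy i j k Hij Hj Hk) as [d Hd].
  enough (d = dm y i j k) by (subst; exact Hd).
  assert (Hi : (i < n)%nat) by lia.
  pose proof (Hz y Hy i Hi) as Hyi. pose proof (Hz y Hy j Hj) as Hyj.
  pose proof (Hm y Hy i j Hij Hj) as HE.
  assert (HX : xv y i - xv y j = cexp (m i j y)) by (rewrite HE; unfold xv; ring).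
  pose proof (cexp_neq0 (m i j y)) as HE0.
  unfold dm. destruct (Nat.eqb_spec k i) as [->|Hki].
  - assert (Hdw : exists g' : C, is_derive (fun w => w + / w - y j - / y j) (y i) g' /\ g' = 1 - / (y i * y i)).
    { eexists; split.
      - apply D_minus. apply D_minus. apply D_plus. apply D_id. apply (D_inv_comp (fun w => w)). apply D_id. exact Hyi.
        apply D_const. apply D_const.
      - field. exact Hyi. }
    destruct Hdw as [g' [Hdw Hg']].
    assert (Hloc : locally (y i) (fun w => cexp (m i j (upd y i w)) = w + / w - y j - / y j)).
    { apply (loc_upd y i); auto. intros w Hw. rewrite (Hm _ Hw i j Hij Hj).
      rewrite upd_eq, upd_neq by lia. reflexivity. }
    pose proof (deriv_of_cexp _ _ _ _ _ Hd Hdw Hloc) as Eq.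
    simpl in Eq. rewrite upd_id, Hg' in Eq.
    rewrite HX. apply solve_lin; auto.
  - destruct (Nat.eqb_spec k j) as [->|Hkj].
    + assert (Hdw : exists g' : C, is_derive (fun w => y i + / y i - w - / w) (y j) g' /\ g' = - (1 - / (y j * y j))).
      { eexists; split.
        - apply D_minus. apply D_minus. apply D_const. apply D_id. apply (D_inv_comp (fun w => w)). apply D_id. exact Hyj.
        - field. exact Hyj. }
      destruct Hdw as [g' [Hdw Hg']].
      assert (Hloc : locally (y j) (fun w => cexp (m i j (upd y j w)) = y i + / y i - w - / w)).
      { apply (loc_upd y j); auto. intros w Hw. rewrite (Hm _ Hw i j Hij Hj).
        rewrite upd_eq, upd_neq by lia. reflexivity. }
      pose proof (deriv_of_cexp _ _ _ _ _ Hd Hdw Hloc) as Eq.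
      simpl in Eq. rewrite upd_id, Hg' in Eq.
      rewrite HX. apply solve_lin in Eq; auto. rewrite Eq. field. auto.
    + assert (Hloc : locally (y k) (fun w => cexp (m i j (upd y k w)) = y i + / y i - y j - / y j)).
      { apply (loc_upd y k); auto. intros w Hw. rewrite (Hm _ Hw i j Hij Hj).
        rewrite !upd_neq by lia. reflexivity. }
      pose proof (deriv_of_cexp _ _ _ _ _ Hd (D_const (y i + / y i - y j - / y j) (y k)) Hloc) as Eq.
      simpl in Eq. rewrite upd_id in Eq.
      apply Cmult_integral in Eq. destruct Eq as [Eq|Eq]; [exact Eq| contradiction].
Qed.


Local Notation phi := (phiB n mu1 mu2 l m).

Lemma deriv_phi y r : U y -> (r < n)%nat ->
  is_derive (fun w => phi (upd y r w)) (y r) (Aval n mu1 mu2 y r * phi y).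
Proof.
  intros Hy Hr. unfold phiB.
  eapply D_eq. apply (D_cexp_comp (fun w => mu1 * csum n (fun k => l k (upd y r w))
                                   + mu2 * csum2 n (fun i j => m i j (upd y r w)))).
  apply D_plus; apply D_scal.
  apply (D_csum n (fun k w => l k (upd y r w))). intros; apply deriv_l; auto.
  apply (D_csum2 n (fun i j w => m i j (upd y r w))). intros; apply deriv_m; auto; lia.
  rewrite upd_id. reflexivity.
Qed.

Lemma pderiv_phi y r : U y -> (r < n)%nat -> pderiv phi r y = Aval n mu1 mu2 y r * phi y.
Proof. intros. apply pderiv_eq. apply deriv_phi; auto. Qed.

Lemma Aval_a y r : U y -> (r < n)%nat -> y r * Aval n mu1 mu2 y r = a_val n mu1 mu2 y r.
Proof.
  intros Hy Hr. pose proof (Hz y Hy r Hr) as Hyr. pose proof (Uz1 y r Hy Hr) as Hyr1.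
  unfold Aval, a_val.
  assert (E1 : csum n (fun k => dl y k r) = (y r + 1) / (2 * y r * (y r - 1))).
  { rewrite <- (csum_delta n r ((y r + 1) / (2 * y r * (y r - 1))) Hr). apply csum_ext.
    intros k Hk. unfold dl. destruct (Nat.eqb_spec r k), (Nat.eqb_spec k r); subst; try lia; reflexivity. }
  set (F := fun a b => if Nat.eqb a r then (if Nat.eqb b r then RtoC 0 else
             (1 - / (y r * y r)) / (xv y r - xv y b)) else RtoC 0).
  assert (E2 : csum2 n (fun i j => dm y i j r) = csum2 n (fun i j => F i j + F j i)).
  { apply csum2_ext. intros i j Hij Hj. unfold dm, F.
    destruct (Nat.eqb_spec r i) as [->|Hri].
    - rewrite Nat.eqb_refl. destruct (Nat.eqb_spec j i); [lia|]. ring.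
    - destruct (Nat.eqb_spec r j) as [->|Hrj].
      + rewrite Nat.eqb_refl. destruct (Nat.eqb_spec i j); [lia|].
        assert (Hx : xv y i - xv y j <> 0) by (apply (Ux y); auto; lia).
        pose proof (neq_sym_C _ _ Hx). field. auto.
      + destruct (Nat.eqb_spec i r); [lia|]. destruct (Nat.eqb_spec j r); [lia|]. ring. }
  pose proof (csum_pair n F) as EP.
  rewrite (csum_zero n (fun a => F a a)) in EP.
  2:{ intros a Ha. unfold F. destruct (Nat.eqb a r); reflexivity. }
  rewrite (csum_ext n (fun a => csum n (fun b => F a b))
     (fun a => if Nat.eqb a r then csum n (fun b => if Nat.eqb b r then RtoC 0 else
             (1 - / (y r * y r)) / (xv y r - xv y b)) else RtoC 0)) in EP.
  2:{ intros a Ha. unfold F. destruct (Nat.eqb a r). reflexivity. rewrite csum_const; ring. }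
  rewrite csum_delta in EP by exact Hr.
  rewrite Cplus_0_l in EP. rewrite E1, E2, <- EP.
  rewrite Cmult_plus_distr_l.
  f_equal. unfold cv. field. auto.
  rewrite Cmult_comm, <- Cmult_assoc, (Cmult_comm (csum _ _)), <- csum_scal.
  f_equal. apply csum_ext. intros b Hb.
  unfold tv. destruct (Nat.eqb_spec b r). ring.
  assert (Hx : xv y r - xv y b <> 0) by (apply (Ux y); auto).
  unfold wv. field. auto.
Qed.


Lemma deriv_b z r : U z -> (r < n)%nat -> is_derive (bfun n mu1 mu2 z r) (z r) (bd n mu1 mu2 z r).
Proof.
  intros Hz0 Hr. pose proof (Hz z Hz0 r Hr) as Hzr. pose proof (Uz1 z r Hz0 Hr) as Hzr1.
  unfold bfun, bd. apply D_plus; apply D_scal.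
  - apply (D_ext (fun w => (w + 1) * / (2 * (w - 1)))). intros; reflexivity.
    eapply D_eq. apply D_mult. apply D_plus. apply D_id. apply D_const.
    apply (D_inv_comp (fun w => 2 * (w - 1))). apply D_scal. apply D_minus. apply D_id. apply D_const.
    apply Cmult_neq0'; auto. intros E; injection E; lra.
    cbv beta. field. auto.
  - apply D_csum. intros j Hj. destruct (Nat.eqb_spec j r) as [->|Hjr].
    + eapply D_eq. apply D_const. rewrite uv_diag. unfold Cdiv. ring.
    + pose proof (Ux z r j Hz0 Hr Hj (not_eq_sym Hjr)) as HD.
      apply (D_ext (fun w => (w - / w) * / ((w + / w) - xv z j))). intros; reflexivity.
      eapply D_eq. apply D_mult. apply D_minus. apply D_id. apply (D_inv_comp (fun w => w)). apply D_id. auto.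
      apply (D_inv_comp (fun w => w + / w - xv z j)). apply D_minus. apply D_plus. apply D_id.
      apply (D_inv_comp (fun w => w)). apply D_id. auto. apply D_const. exact HD.
      cbv beta. unfold uv. destruct (Nat.eqb_spec j r); [lia|].
      change (z r + / z r - xv z j) with (xv z r - xv z j).
      set (D := xv z r - xv z j) in *. clearbody D.
      unfold wv, xv. field. auto.
Qed.


Lemma second z r : U z -> (r < n)%nat ->
  pdiff (euler r phi) r z /\
  euler r (euler r phi) z = phi z *
    (a_val n mu1 mu2 z r * a_val n mu1 mu2 z r
     + (mu1 * (- (z r / ((z r - 1) * (z r - 1)))) + mu2 * csum n (fun j => uv z r j))).
Proof.
  intros Hz0 Hr. pose proof (Hz z Hz0 r Hr) as Hzr. pose proof (Uz1 z r Hz0 Hr) as Hzr1.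
  assert (Hloc : locally (z r) (fun w => bfun n mu1 mu2 z r w * phi (upd z r w) = euler r phi (upd z r w))).
  { apply (loc_upd z r); auto. intros w Hw. unfold euler.
    rewrite (pderiv_phi _ r Hw Hr), Cmult_assoc, (Aval_a _ r Hw Hr), a_val_upd. reflexivity. }
  assert (Hd2 : is_derive (fun w => euler r phi (upd z r w)) (z r)
     (bd n mu1 mu2 z r * phi z + bfun n mu1 mu2 z r (z r) * (Aval n mu1 mu2 z r * phi z))).
  { apply (D_ext_loc _ _ _ _ Hloc). eapply D_eq. apply D_mult. apply deriv_b; auto.
    apply deriv_phi; auto. cbv beta. rewrite upd_id. reflexivity. }
  split. eexists; exact Hd2.
  unfold euler at 1. rewrite (pderiv_eq _ _ _ _ Hd2).
  assert (Eb : bfun n mu1 mu2 z r (z r) = a_val n mu1 mu2 z r).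
  { rewrite <- a_val_upd, upd_id. reflexivity. }
  rewrite Eb.
  assert (EA := Aval_a z r Hz0 Hr).
  assert (EB : z r * bd n mu1 mu2 z r =
     mu1 * (- (z r / ((z r - 1) * (z r - 1)))) + mu2 * csum n (fun j => uv z r j)).
  { unfold bd. rewrite Cmult_plus_distr_l. f_equal. field. auto.
    rewrite Cmult_assoc, (Cmult_comm (z r) mu2), <- Cmult_assoc, <- csum_scal. f_equal.
    apply csum_ext. intros j Hj. field. auto. }
  rewrite <- EB, <- EA. ring.
Qed.

Lemma main z : U z ->
  (forall r, (r < n)%nat -> pdiff phi r z /\ pdiff (euler r phi) r z) /\
    csum n (fun r => euler r (euler r phi) z)
    + (mu1 * (1 - mu1) * csum n (fun r => z r / ((z r - 1) * (z r - 1)))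
       + 2 * mu2 * (1 - mu2) *
         (csum2 n (fun i j => z i * z j / ((z i - z j) * (z i - z j)))
          + csum2 n (fun i j => z i * z j / ((z i * z j - 1) * (z i * z j - 1)))))
      * phi z
    = (INR n * mu1 * mu1 / 4
       + INR n * (INR n - 1) / 2 * mu1 * mu2
       + INR n * (INR n - 1) * (2 * INR n - 1) * mu2 * mu2 / 6)
      * phi z.
Proof.
  intros Hz0. split.
  - intros r Hr. split. exists (Aval n mu1 mu2 z r * phi z). apply deriv_phi; auto.
    apply (second z r Hz0 Hr).
  - rewrite (csum_ext n _ (fun r => phi z *
       ((mu1 * cv z r + mu2 * csum n (fun j => tv z r j))
                   * (mu1 * cv z r + mu2 * csum n (fun j => tv z r j))
                   + mu1 * (- (z r / ((z r - 1) * (z r - 1))))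
                   + mu2 * csum n (fun j => uv z r j)))).
    2:{ intros r Hr. rewrite (proj2 (second z r Hz0 Hr)). unfold a_val. ring. }
    rewrite csum_scal.
    rewrite <- (final_alg n z mu1 mu2).
    ring.
    intros; apply (Hz z Hz0); auto.
    intros; apply (Uz1 z); auto.
    intros; apply (Ux z); auto.
Qed.

End Main.

Theorem theorem6p5 (n : nat) (mu1 mu2 : C) (U : (nat -> C) -> Prop)
  (s l : nat -> (nat -> C) -> C) (m : nat -> nat -> (nat -> C) -> C) :
  coord_open n U ->
  (forall z, U z -> forall r, (r < n)%nat -> z r <> RtoC 0) ->
  (* s r is a branch of z_r^{1/2} *)
  (forall z, U z -> forall r, (r < n)%nat -> s r z * s r z = z r) ->
  (* l r is a holomorphic branch of log (z_r^{1/2} - z_r^{-1/2}) *)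
  (forall z, U z -> forall r, (r < n)%nat ->
     cexp (l r z) = s r z - / s r z) ->
  (forall z, U z -> forall r k, (r < n)%nat -> (k < n)%nat -> pdiff (l r) k z) ->
  (* m i j is a holomorphic branch of log (z_i + z_i^{-1} - z_j - z_j^{-1}) *)
  (forall z, U z -> forall i j, (i < j)%nat -> (j < n)%nat ->
     cexp (m i j z) = z i + / z i - z j - / z j) ->
  (forall z, U z -> forall i j k, (i < j)%nat -> (j < n)%nat -> (k < n)%nat ->
     pdiff (m i j) k z) ->
  forall z, U z ->
    (forall r, (r < n)%nat ->
       pdiff (phiB n mu1 mu2 l m) r z /\
       pdiff (euler r (phiB n mu1 mu2 l m)) r z) /\
    csum n (fun r => euler r (euler r (phiB n mu1 mu2 l m)) z)
    + (mu1 * (1 - mu1) * csum n (fun r => z r / ((z r - 1) * (z r - 1)))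
       + 2 * mu2 * (1 - mu2) *
         (csum2 n (fun i j => z i * z j / ((z i - z j) * (z i - z j)))
          + csum2 n (fun i j => z i * z j / ((z i * z j - 1) * (z i * z j - 1)))))
      * phiB n mu1 mu2 l m z
    = (INR n * mu1 * mu1 / 4
       + INR n * (INR n - 1) / 2 * mu1 * mu2
       + INR n * (INR n - 1) * (2 * INR n - 1) * mu2 * mu2 / 6)
      * phiB n mu1 mu2 l m z.
Proof.
  intros HU Hz Hs Hl Hld Hm Hmd z Hz0.
  exact (main n mu1 mu2 U s l m HU Hz Hs Hl Hld Hm Hmd z Hz0).
Qed.
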